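(* Consider an affine multiple yield curve model (as defined in the context). Then for all $0\le t\le T\le\mathbb{T}$ and $i\in\{1,\dots,m\}$, $$B(t,T)=\mathbb{E}[B_t/B_T\mid\mathcal{F}_t]=\mathbb{E}[e^{Z_T-Z_t}\mid\mathcal{F}_t]=e^{\phi(T-t,0,0,1)+\langle\psi(T-t,0,0,1),X_t\rangle}$$ and $$S^{\delta_i}(t,T)=\frac{\mathbb{E}[e^{Z_T+u_i^\top Y_T}\mid\mathcal{F}_t]}{\mathbb{E}[e^{Z_T}\mid\mathcal{F}_t]}=e^{u_i^\top Y_t+\phi(T-t,0,u_i,1)-\phi(T-t,0,0,1)+\langle\psi(T-t,0,u_i,1)-\psi(T-t,0,0,1),X_t\rangle}.$$
   Context: Fix a horizon $\mathbb{T}>0$ and a filtered probability space $(\Omega,\mathcal{F},(\mathcal{F}_t)_{0\le t\le\mathbb{T}},\mathbb{Q})$, $\mathbb{Q}$ a risk neutral measure under which OIS bond prices $B(t,T)$ discounted by the OIS bank account $B_t$ are martingales, i.e. $B(t,T)=\mathbb{E}[B_t/B_T\mid\mathcal{F}_t]$; expectations are under $\mathbb{Q}$. $\mathbb{Q}^T$ denotes the $T$-forward measure, $\frac{d\mathbb{Q}^T}{d\mathbb{Q}}|_{\mathcal{F}_t}=\frac{B(t,T)}{B_tB(0,T)}$, and for each tenor $\delta_i$ the multiplicative spreads $(S^{\delta_i}(t,T))_{t\in[0,T]}$ are $\mathbb{Q}^T$-martingales, so $S^{\delta_i}(t,T)=\mathbb{E}^{\mathbb{Q}^T}[S^{\delta_i}(T,T)\mid\mathcal{F}_t]$.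 Affine multiple yield curve model: a process $\mathcal{X}=(X,Y,Z)$ with state space $D=D_X\times\mathbb{R}^{n+1}$, $D_X$ a closed convex subset of a real Euclidean space $V$ with inner product $\langle\cdot,\cdot\rangle$, such that (A1) $\mathcal{X}$ is a stochastically continuous time-homogeneous Markov process on $D$, and (A2) there are functions $\phi,\psi$ with $\mathbb{E}[e^{\langle v,X_t\rangle+u^\top Y_t+wZ_t}]=e^{\phi(t,v,u,w)+\langle\psi(t,v,u,w),x\rangle+u^\top y+wz}$ for all initial states $(x,y,z)\in D$, $t\in[0,\mathbb{T}]$ and $(v,u,w)\in\mathfrak{U}:=\{\zeta\in(V+\mathrm{i}V)\times\mathbb{C}^{n+1}:\mathbb{E}[e^{\langle\zeta,\mathcal{X}_t\rangle}]<\infty\ \forall t\in[0,\mathbb{T}]\}$; vectors $u_0=0,u_1,\dots,u_m\in\mathbb{R}^n$ with $(0,u_i,1)\in\mathfrak{U}$ for $i=0,\dots,m$; OIS bank account $B_t=e^{-Z_t}=e^{\int_0^tr_sds}$ with $r_t=l+\langle\lambda,X_t\rangle$, $l\in\mathbb{R}$, $\lambda\in V$; spot spreads $S^{\delta_i}(t,t)=e^{u_i^\top Y_t}$, $i=1,\dots,m$. *)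

(* Defs.v *)
From HB Require Import structures.
From mathcomp Require Import all_boot all_order all_algebra.
From mathcomp Require Import all_classical all_reals all_analysis.
Unset Printing Implicit Defensive.
Import Order.TTheory GRing.Theory Num.Theory.
Import numFieldNormedType.Exports.
Local Open Scope classical_set_scope.
Local Open Scope ring_scope.

Section AffineMYC.
Context {R : realType}.

Definition dotv {k : nat} (a b : 'rV[R]_k) : R := \sum_(j < k) a 0 j * b 0 j.

Definition state (k n : nat) := ('rV[R]_k * 'rV[R]_n * R)%type.

(* Borel sigma-algebra on the state space: generated by the coordinates. *)
Definition coord_gen (k n : nat) : set (set (state k n)) :=
  [set A | exists B : set R, measurable B /\
     ((exists j : 'I_k, A = (fun s : state k n => s.1.1 0 j) @^-1` B) \/
      (exists j : 'I_n, A = (fun s : state k n => s.1.2 0 j) @^-1` B) \/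
      A = (fun s : state k n => s.2) @^-1` B)].
Definition state_meas (k n : nat) : set (set (state k n)) := <<s coord_gen k n >>.

Definition meas_wrt {T : Type} (G : set (set T)) (f : T -> R) : Prop :=
  forall B : set R, measurable B -> G (f @^-1` B).

Definition sdist {k n : nat} (a b : state k n) : R :=
  \sum_(j < k) `|a.1.1 0 j - b.1.1 0 j| + \sum_(j < n) `|a.1.2 0 j - b.1.2 0 j|
  + `|a.2 - b.2|.

Definition convex_rV {k : nat} (C : set 'rV[R]_k) : Prop :=
  forall a b, C a -> C b -> forall l : R, 0 <= l <= 1 -> C (l *: a + (1 - l) *: b).

Definition aff_expo {k n : nat} (v : 'rV[R]_k) (u : 'rV[R]_n) (w : R) (s : state k n) : R :=
  dotv v s.1.1 + dotv u s.1.2 + w * s.2.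

Context {d : measure_display} {Omega : measurableType d}.

Definition is_condexp (P : probability Omega R) (G : set (set Omega)) (H g : Omega -> R) : Prop :=
  meas_wrt G g /\
  forall A, G A -> (\int[P]_(w in A) (g w)%:E = \int[P]_(w in A) (H w)%:E)%E.

(* g is a version of E_{P'}[H | G] where dP' = rho dP *)
Definition is_condexp_dens (P : probability Omega R) (rho : Omega -> R)
    (G : set (set Omega)) (H g : Omega -> R) : Prop :=
  meas_wrt G g /\
  forall A, G A ->
    (\int[P]_(w in A) (g w * rho w)%:E = \int[P]_(w in A) (H w * rho w)%:E)%E.

Definition filtration (TT : R) (F : R -> set (set Omega)) : Prop :=
  (forall t, 0 <= t <= TT -> sigma_algebra setT (F t) /\ F t `<=` measurable) /\
  (forall s t, 0 <= s -> s <= t -> t <= TT -> F s `<=` F t).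

Context {k n : nat}.

Definition markov_family (TT : R) (F : R -> set (set Omega)) (D : set (state k n))
    (Xp : R -> Omega -> state k n) (Qx : state k n -> probability Omega R) : Prop :=
  [/\ (forall t, 0 <= t <= TT -> forall A, state_meas k n A -> F t (Xp t @^-1` A)),
      (forall x, D x -> (Qx x).-negligible [set w | Xp 0 w <> x]),
      (forall x, D x -> forall t, 0 <= t <= TT ->
          (Qx x).-negligible [set w | ~ D (Xp t w)]) &
      (forall x, D x -> forall t s, 0 <= t -> 0 <= s -> t + s <= TT ->
        forall f : state k n -> R, meas_wrt (state_meas k n) f ->
        (exists M : R, forall y, `|f y| <= M) ->
        is_condexp (Qx x) (F t) (fun w => f (Xp (t + s) w))
          (fun w => fine (\int[Qx (Xp t w)]_v (f (Xp s v))%:E)))].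

Definition stoch_continuous (TT : R) (D : set (state k n))
    (Xp : R -> Omega -> state k n) (Qx : state k n -> probability Omega R) : Prop :=
  forall x, D x -> forall t, 0 <= t <= TT -> forall eps eta : R, 0 < eps -> 0 < eta ->
    exists delta : R, 0 < delta /\
      forall s, 0 <= s <= TT -> `|s - t| < delta ->
        (Qx x [set w | (eps < sdist (Xp s w) (Xp t w))%R] < eta%:E)%E.

(* real part of the set U: exponential moments finite for all t and all initial states *)
Definition Ureal (TT : R) (D : set (state k n)) (Xp : R -> Omega -> state k n)
    (Qx : state k n -> probability Omega R) (v : 'rV[R]_k) (u : 'rV[R]_n) (w : R) : Prop :=
  forall x, D x -> forall t, 0 <= t <= TT ->
    (\int[Qx x]_om (expR (aff_expo v u w (Xp t om)))%:E < +oo)%E.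

Definition affine_property (TT : R) (D : set (state k n)) (Xp : R -> Omega -> state k n)
    (Qx : state k n -> probability Omega R)
    (phi : R -> 'rV[R]_k -> 'rV[R]_n -> R -> R)
    (psi : R -> 'rV[R]_k -> 'rV[R]_n -> R -> 'rV[R]_k) : Prop :=
  forall v u w, Ureal TT D Xp Qx v u w -> forall x, D x -> forall t, 0 <= t <= TT ->
    (\int[Qx x]_om (expR (aff_expo v u w (Xp t om)))%:E =
    (expR (phi t v u w + dotv (psi t v u w) x.1.1 + dotv u x.1.2 + w * x.2))%:E)%E.

Definition short_rate (TT : R) (D : set (state k n)) (Xp : R -> Omega -> state k n)
    (Qx : state k n -> probability Omega R) (l : R) (lam : 'rV[R]_k) : Prop :=
  forall x, D x -> (Qx x).-negligible
    [set om | exists t, 0 <= t <= TT /\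
       ((Xp 0 om).2 - (Xp t om).2)%:E <>
       (\int[@lebesgue_measure R]_(s in (`[0%R, t] : set R)) (l + dotv lam (Xp s om).1.1)%:E)%E].

End AffineMYC.

(* Main.v *)
Require Import Defs.
From HB Require Import structures.
From mathcomp Require Import all_boot all_order all_algebra.
From mathcomp Require Import all_classical all_reals all_analysis.
Import Order.TTheory GRing.Theory Num.Theory.
Import numFieldNormedType.Exports.
Local Open Scope classical_set_scope.
Local Open Scope ring_scope.
Set Warnings "-all".
From mathcomp Require Import measurable_realfun.
Import measurable_realfun.
From mathcomp Require Import ring lra.
Section Gen.
Context {R : realType} {d : measure_display} {Omega : measurableType d}.

Lemma wrt_OG {G : set (set Omega)} {f : Omega -> R} :
  sigma_algebra setT G -> meas_wrt G f ->
  measurable_fun (T:=g_sigma_algebraType G) (U:=R) setT f.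
Proof.
move=> sG mf _ B mB; rewrite setTI.
by rewrite /measurable /= sigma_algebra_id //; exact: mf.
Qed.

Lemma OG_wrt {G : set (set Omega)} {f : Omega -> R} :
  sigma_algebra setT G ->
  measurable_fun (T:=g_sigma_algebraType G) (U:=R) setT f -> meas_wrt G f.
Proof.
move=> sG mf B mB; have := mf measurableT B mB; rewrite setTI.
by rewrite /measurable /= sigma_algebra_id.
Qed.

Lemma OG_meas {G : set (set Omega)} {A : set Omega} :
  sigma_algebra setT G -> G `<=` measurable ->
  measurable (A : set (g_sigma_algebraType G)) -> measurable A.
Proof. by move=> sG Gm; rewrite /measurable /= sigma_algebra_id // => /Gm. Qed.

Lemma OG_G {G : set (set Omega)} {A : set Omega} :
  sigma_algebra setT G ->
  measurable (A : set (g_sigma_algebraType G)) -> G A.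
Proof. by move=> sG; rewrite /measurable /= sigma_algebra_id. Qed.

Lemma G_OG {G : set (set Omega)} {A : set Omega} :
  sigma_algebra setT G -> G A ->
  measurable (A : set (g_sigma_algebraType G)).
Proof. by move=> sG; rewrite /measurable /= sigma_algebra_id. Qed.

Lemma wrt_meas {G : set (set Omega)} {f : Omega -> R} :
  G `<=` measurable -> meas_wrt G f -> measurable_fun setT f.
Proof. by move=> Gm mf _ B mB; rewrite setTI; apply: Gm; exact: mf. Qed.

Lemma OG_measfun {G : set (set Omega)} {f : Omega -> R} :
  sigma_algebra setT G -> G `<=` measurable ->
  measurable_fun (T:=g_sigma_algebraType G) (U:=R) setT f ->
  measurable_fun setT f.
Proof. by move=> sG Gm mf; exact: (wrt_meas Gm (OG_wrt sG mf)). Qed.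

End Gen.
Section Uniq.
Context {R : realType} {d : measure_display} {Omega : measurableType d}.
Variable (Q : probability Omega R).

Lemma meas_ge0 {d'} {T : measurableType d'} (f : T -> R) :
  measurable_fun setT f -> measurable [set x | 0 <= f x].
Proof.
move=> mf; have := mf measurableT `[0, +oo[%classic (measurable_itv _).
rewrite setTI; congr measurable; apply/seteqP; split => x /=;
  by rewrite in_itv /= andbT.
Qed.

Lemma negl_lt (G : set (set Omega)) (g1 g2 w : Omega -> R) :
  sigma_algebra setT G -> G `<=` measurable -> meas_wrt G g1 -> meas_wrt G g2 ->
  measurable_fun setT w -> (forall x, 0 < w x) ->
  Q.-integrable setT (EFin \o w) ->
  (forall A, G A -> (\int[Q]_(x in A) (g1 x * w x)%:E =
                     \int[Q]_(x in A) (g2 x * w x)%:E)%E) ->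
  Q.-negligible [set x | g1 x < g2 x].
Proof.
move=> sG Gm mg1 mg2 mw w0 iw hyp.
have mg1O := wrt_OG sG mg1; have mg2O := wrt_OG sG mg2.
have mg1m := wrt_meas Gm mg1; have mg2m := wrt_meas Gm mg2.
pose E := fun m : nat => [set x | 0 <= m%:R - `|g1 x|] `&`
   [set x | 0 <= m%:R - `|g2 x|] `&` [set x | 0 <= g2 x - g1 x - m.+1%:R^-1].
have GE m : G (E m).
  apply: (OG_G sG); apply: measurableI; first apply: measurableI.
  - apply: meas_ge0; apply: measurable_funB => //.
    exact: measurableT_comp.
  - apply: meas_ge0; apply: measurable_funB => //.
    exact: measurableT_comp.
  - apply: meas_ge0; apply: measurable_funB => //.
    exact: measurable_funB.
have NE m : Q.-negligible (E m).
  have mE : measurable (E m) := Gm _ (GE m).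
  have iwE : Q.-integrable (E m) (EFin \o w).
    exact: integrableS iw.
  have ig (g : Omega -> R) : measurable_fun setT g ->
      (forall x, E m x -> `|g x| <= m%:R) ->
      Q.-integrable (E m) (fun x => (g x * w x)%:E).
    move=> mg gb.
    apply: (@le_integrable _ _ _ Q _ mE (fun x => (g x * w x)%:E) (fun x => ((m%:R)%:E * (EFin \o w) x)%E)).
    - apply/measurable_EFinP; apply: measurable_funM.
        exact: measurable_funS mg.
      exact: measurable_funS mw.
    - move=> x Ex /=; rewrite lee_fin !normrM normr_nat ler_wpM2r //.
      exact: gb.
    - exact: integrableZl.
  have i1 := ig g1 mg1m (fun x Ex => ltac:(case: Ex => [[]] /=; rewrite subr_ge0 => //)).
  have i2 := ig g2 mg2m (fun x Ex => ltac:(case: Ex => [[]] /=; rewrite !subr_ge0 => //)).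
  have h0 : (\int[Q]_(x in E m) ((g2 x * w x)%:E - (g1 x * w x)%:E) = 0)%E.
    by rewrite integralB_EFin // (hyp _ (GE m)) subee // integrable_fin_num.
  have hle : (\int[Q]_(x in E m) (m.+1%:R^-1 * w x)%:E <= 0)%E.
    rewrite -h0; apply: le_integral => //.
    - under eq_fun do rewrite EFinM.
      exact: integrableZl.
    - under eq_fun do rewrite -EFinB. 
      rewrite (_ : (fun x => _) = (fun x => (g2 x * w x)%:E + (-1)%:E * (g1 x * w x)%:E)%E).
        apply: integrableD => //; exact: integrableZl.
      by apply/funext => x; rewrite -EFinM -EFinD mulN1r.
    - move=> x /set_mem [_ /=]; rewrite subr_ge0 => h.
      rewrite -EFinB lee_fin -mulrBl ler_wpM2r //.
        exact: ltW.
  have hz : (\int[Q]_(x in E m) `|(m.+1%:R^-1 * w x)%:E| = 0)%E.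
    apply/eqP; rewrite eq_le; apply/andP; split; last exact: integral_ge0.
    rewrite (le_trans _ hle) //; apply: ge0_le_integral => //.
    - apply: measurableT_comp => //; apply/measurable_EFinP.
      by apply: measurable_funM => //; exact: measurable_funS mw.
    - apply/measurable_EFinP.
      by apply: measurable_funM => //; exact: measurable_funS mw.
    - by move=> x _; rewrite abse_EFin lee_fin ger0_norm // mulr_ge0 // ltW.
  have /ae_eq_integral_abs := hz.
  case/(_ mE _)/Wrap.
  - apply/measurable_EFinP.
    by apply: measurable_funM => //; exact: measurable_funS mw.
  move=> [N [mN N0 sub]]; exists N; split => // x Ex; apply: sub => /=.
  move/(_ Ex) => /= [] /eqP; rewrite mulf_eq0 invr_eq0 pnatr_eq0 /=.
  by rewrite gt_eqF.
apply: (@negligibleS _ _ _ _ (\bigcup_m E m)); last exact: negligible_bigcup.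
move=> x /= lt12; set M := `|g1 x| + `|g2 x| + (g2 x - g1 x)^-1.
have M0 : 0 < (g2 x - g1 x)^-1 by rewrite invr_gt0 subr_gt0.
exists (Num.truncn M).+1 => //=.
have hM : M < ((Num.truncn M).+1)%:R by rewrite truncnS_gt.
have n1 := normr_ge0 (g1 x); have n2 := normr_ge0 (g2 x).
have e2 : (Num.truncn M).+2%:R = (Num.truncn M).+1%:R + 1 :> R by rewrite -natr1.
split; first split; rewrite /= subr_ge0.
- rewrite /M in hM; lra.
- rewrite /M in hM; lra.
rewrite -(invrK (g2 x - g1 x)) lef_pV2 ?posrE ?ltr0n ?invr_gt0 ?subr_gt0 //.
rewrite /M in hM; lra.
Qed.

End Uniq.
Section Pull.
Context {R : realType} {d : measure_display} {Omega : measurableType d}.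
Variable (Q : probability Omega R).
Import HBNNSimple.

Lemma negl_neq_w (G : set (set Omega)) (g1 g2 w : Omega -> R) :
  sigma_algebra setT G -> G `<=` measurable -> meas_wrt G g1 -> meas_wrt G g2 ->
  measurable_fun setT w -> (forall x, 0 < w x) ->
  Q.-integrable setT (EFin \o w) ->
  (forall A, G A -> (\int[Q]_(x in A) (g1 x * w x)%:E =
                     \int[Q]_(x in A) (g2 x * w x)%:E)%E) ->
  Q.-negligible [set x | g1 x <> g2 x].
Proof.
move=> sG Gm m1 m2 mw w0 iw h.
apply: (@negligibleS _ _ _ _ ([set x | g1 x < g2 x] `|` [set x | g2 x < g1 x])).
  move=> x /= /eqP; rewrite neq_lt => /orP[]; by [left|right].
apply: negligibleU; first exact: (negl_lt Q G g1 g2 w sG Gm m1 m2 mw w0 iw h).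
by apply: (negl_lt Q G g2 g1 w sG Gm m2 m1 mw w0 iw) => A GA; rewrite h.
Qed.

Lemma negl_neq (G : set (set Omega)) (g1 g2 : Omega -> R) :
  sigma_algebra setT G -> G `<=` measurable -> meas_wrt G g1 -> meas_wrt G g2 ->
  (forall A, G A -> (\int[Q]_(x in A) (g1 x)%:E =
                     \int[Q]_(x in A) (g2 x)%:E)%E) ->
  Q.-negligible [set x | g1 x <> g2 x].
Proof.
move=> sG Gm m1 m2 h.
apply: (negl_neq_w G g1 g2 (cst 1) sG Gm m1 m2) => //.
- exact: finite_measure_integrable_cst.
move=> A GA; transitivity (\int[Q]_(x in A) (g1 x)%:E)%E.
  by apply: eq_integral => x _; rewrite /cst /= mulr1.
by rewrite h //; apply: eq_integral => x _; rewrite /cst /= mulr1.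
Qed.

Lemma simple_pull (G : set (set Omega)) (g H : Omega -> R)
  (s : {nnsfun (g_sigma_algebraType G) >-> R}) (B : set Omega) :
  sigma_algebra setT G -> G `<=` measurable ->
  measurable_fun setT g -> measurable_fun setT H ->
  (forall x, 0 <= g x) -> (forall x, 0 <= H x) ->
  (forall A, G A -> (\int[Q]_(x in A) (g x)%:E = \int[Q]_(x in A) (H x)%:E)%E) ->
  G B ->
  (\int[Q]_(x in B) (s x * g x)%:E = \int[Q]_(x in B) (s x * H x)%:E)%E.
Proof.
move=> sG Gm mg mH g0 H0 hyp GB.
have mB : measurable B := Gm _ GB.
pose K := size (finmap.enum_fset (fset_set (range s))).
pose c := fun i : nat => (finmap.enum_fset (fset_set (range s)))`_i.
pose S := fun i : nat => (s : Omega -> R) @^-1` [set c i].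
have GS i : G (S i).
  apply: (OG_G sG); exact: (measurable_funPTI s (measurable_set1 (c i))).
have mS i : measurable (S i) := Gm _ (GS i).
have cS0 i x : 0 <= c i * \1_(S i) x.
  rewrite indicE; case: (boolP (x \in S i)) => [/set_mem /= <-|_].
    by rewrite mulr1 fun_ge0.
  by rewrite mulr0.
have key (F : Omega -> R) : measurable_fun setT F -> (forall x, 0 <= F x) ->
  (\int[Q]_(x in B) (s x * F x)%:E =
   \sum_(i < K) \int[Q]_(x in B) ((c i * \1_(S i) x) * F x)%:E)%E.
  move=> mF F0.
  rewrite -ge0_integral_sum //.
  - apply: eq_integral => x _.
    by rewrite sumEFin {1}(fimfunEord s x) mulr_suml.
  - move=> i; apply/measurable_EFinP; apply: measurable_funM.
      apply: measurable_funM; first exact: measurable_cst.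
      by apply: measurable_indic.
    exact: measurable_funS mF.
  - by move=> i x _; rewrite lee_fin mulr_ge0.
rewrite (key g) // (key H) //; apply: eq_bigr => i _.
have [ci0|ci0] := ltP (c i) 0.
  have z x : c i * \1_(S i) x = 0.
    have := cS0 i x; rewrite indicE; case: (x \in S i).
      by rewrite mulr1 leNgt ci0.
    by rewrite mulr0.
  by under eq_integral do rewrite z mul0r; under [RHS]eq_integral do rewrite z mul0r.
have tr (F : Omega -> R) : measurable_fun setT F -> (forall x, 0 <= F x) ->
  (\int[Q]_(x in B) ((c i * \1_(S i) x) * F x)%:E =
   (c i)%:E * \int[Q]_(x in B `&` S i) (F x)%:E)%E.
  move=> mF F0.
  rewrite __deprecated__integral_setI_indic // -ge0_integralZl //.
  - by apply: eq_integral => x _; rewrite -!EFinM; congr EFin; ring.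
  - under eq_fun do rewrite -EFinM.
    apply/measurable_EFinP; apply: measurable_funM.
      exact: measurable_funS mF.
    exact: measurable_indic.
  - by move=> x _; rewrite -EFinM lee_fin mulr_ge0 // indicE; case: (_ \in _).
rewrite (tr g) // (tr H) // hyp //.
apply: (OG_G sG); apply: measurableI; exact: (G_OG sG).
Qed.
End Pull.
Section Pull2.
Context {R : realType} {d : measure_display} {Omega : measurableType d}.
Variable (Q : probability Omega R).
Import HBNNSimple.

Lemma pullout (G : set (set Omega)) (phi g H : Omega -> R) :
  sigma_algebra setT G -> G `<=` measurable ->
  meas_wrt G phi -> (forall x, 0 <= phi x) ->
  measurable_fun setT g -> measurable_fun setT H ->
  (forall x, 0 <= g x) -> (forall x, 0 <= H x) ->
  (forall A, G A -> (\int[Q]_(x in A) (g x)%:E = \int[Q]_(x in A) (H x)%:E)%E) ->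
  forall B, G B ->
  (\int[Q]_(x in B) (phi x * g x)%:E = \int[Q]_(x in B) (phi x * H x)%:E)%E.
Proof.
move=> sG Gm mphi phi0 mg mH g0 H0 hyp B GB.
have mBO : measurable (B : set (g_sigma_algebraType G)) := G_OG sG GB.
have mB : measurable B := Gm _ GB.
have mphiO : measurable_fun (T := g_sigma_algebraType G) B (EFin \o phi).
  apply/measurable_EFinP; apply: measurable_funS (wrt_OG sG mphi) => //.
pose s := nnsfun_approx mBO mphiO.
have lim (F : Omega -> R) : measurable_fun setT F -> (forall x, 0 <= F x) ->
  (\int[Q]_(x in B) (phi x * F x)%:E =
   limn (fun n => \int[Q]_(x in B) (s n x * F x)%:E))%E.
  move=> mF F0.
  rewrite -monotone_convergence //.
  - apply: eq_integral => x /set_mem Bx; apply/esym/cvg_lim => //.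
    rewrite EFinM; under eq_fun do rewrite EFinM.
    apply: cvgeZr => //.
    exact: (cvg_nnsfun_approx mBO mphiO (fun x _ => phi0 x)).
  - move=> n; apply/measurable_EFinP; apply: measurable_funM.
      apply: measurable_funS (OG_measfun sG Gm (measurable_funPT (s n))) => //.
    exact: measurable_funS mF.
  - by move=> n x _; rewrite lee_fin mulr_ge0 // fun_ge0.
  - move=> x Bx m n mn; rewrite lee_fin ler_wpM2r //.
    by move/lefP: (nd_nnsfun_approx mBO mphiO mn); apply.
rewrite (lim g) // (lim H) //.
by under eq_fun => n do rewrite (simple_pull Q G g H (s n) B sG Gm mg mH g0 H0 hyp GB).
Qed.
End Pull2.
Section StateMeas.
Context {R : realType} {k n : nat}.
Local Notation ST := (g_sigma_algebraType (@coord_gen R k n)).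

Lemma ST_wrt (f : state k n -> R) :
  measurable_fun (T:=ST) (U:=R) setT f -> meas_wrt (state_meas k n) f.
Proof. by move=> mf B mB; have := mf measurableT B mB; rewrite setTI. Qed.

Lemma ST_c2 : measurable_fun (T:=ST) (U:=R) setT (fun s => s.2).
Proof.
move=> _ B mB; rewrite setTI; apply: sub_sigma_algebra.
by exists B; split => //; right; right.
Qed.

Lemma ST_c11 j : measurable_fun (T:=ST) (U:=R) setT (fun s => s.1.1 0 j).
Proof.
move=> _ B mB; rewrite setTI; apply: sub_sigma_algebra.
by exists B; split => //; left; exists j.
Qed.

Lemma ST_c12 j : measurable_fun (T:=ST) (U:=R) setT (fun s => s.1.2 0 j).
Proof.
move=> _ B mB; rewrite setTI; apply: sub_sigma_algebra.
by exists B; split => //; right; left; exists j.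
Qed.

Lemma ST_dot1 (a : 'rV[R]_k) :
  measurable_fun (T:=ST) (U:=R) setT (fun s => dotv a s.1.1).
Proof.
rewrite /dotv; apply: measurable_sum => j; apply: measurable_funM.
  exact: measurable_cst.
exact: ST_c11.
Qed.

Lemma ST_dot2 (a : 'rV[R]_n) :
  measurable_fun (T:=ST) (U:=R) setT (fun s => dotv a s.1.2).
Proof.
rewrite /dotv; apply: measurable_sum => j; apply: measurable_funM.
  exact: measurable_cst.
exact: ST_c12.
Qed.

Lemma ST_aff v u w : measurable_fun (T:=ST) (U:=R) setT (aff_expo v u w).
Proof.
rewrite /aff_expo; apply: measurable_funD; first apply: measurable_funD.
- exact: ST_dot1.
- exact: ST_dot2.
apply: measurable_funM; first exact: measurable_cst.
exact: ST_c2.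
Qed.

End StateMeas.

Lemma ST_exp {R : realType} {k n : nat} (c : R) (P : 'rV[R]_k) (u : 'rV[R]_n) (w : R) :
  measurable_fun (T:=g_sigma_algebraType (@coord_gen R k n)) (U:=R) setT
    (fun y : @state R k n => expR (c + dotv P y.1.1 + dotv u y.1.2 + w * y.2)).
Proof.
apply: measurableT_comp; first exact: measurable_expR.
apply: measurable_funD; first apply: measurable_funD; first apply: measurable_funD.
- exact: measurable_cst.
- exact: ST_dot1.
- exact: ST_dot2.
apply: measurable_funM; first exact: measurable_cst.
exact: ST_c2.
Qed.
Section Model.
Context {R : realType} {d : measure_display} {Omega : measurableType d} {k n : nat}.
Variables (TT : R) (DX : set 'rV[R]_k) (F : R -> set (set Omega))
  (Xp : R -> Omega -> @state R k n) (Qx : @state R k n -> probability Omega R)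
  (phi : R -> 'rV[R]_k -> 'rV[R]_n -> R -> R)
  (psi : R -> 'rV[R]_k -> 'rV[R]_n -> R -> 'rV[R]_k).
Hypotheses (hF : filtration TT F)
  (hM : markov_family TT F [set s : @state R k n | DX s.1.1] Xp Qx)
  (hA : affine_property TT [set s : @state R k n | DX s.1.1] Xp Qx phi psi).

Lemma Fsub {t} : 0 <= t <= TT -> F t `<=` measurable.
Proof. by move=> ht; case: hF => h _; case: (h t ht). Qed.

Lemma Fsig {t} : 0 <= t <= TT -> sigma_algebra setT (F t).
Proof. by move=> ht; case: hF => h _; case: (h t ht). Qed.

Lemma Xp_wrt {t} {f : @state R k n -> R} : 0 <= t <= TT ->
  meas_wrt (state_meas k n) f -> meas_wrt (F t) (fun w => f (Xp t w)).
Proof. by move=> ht mf B mB; case: hM => h1 _ _ _; exact: (h1 t ht _ (mf B mB)). Qed.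

Lemma Xp_meas {t} {f : @state R k n -> R} : 0 <= t <= TT ->
  meas_wrt (state_meas k n) f -> measurable_fun setT (fun w => f (Xp t w)).
Proof. by move=> ht mf; exact: (wrt_meas (Fsub ht) (Xp_wrt ht mf)). Qed.

Lemma key (u : 'rV[R]_n) (x0 : @state R k n) :
  Ureal TT [set s : @state R k n | DX s.1.1] Xp Qx 0 u 1 -> DX x0.1.1 ->
  forall t T, 0 <= t -> t <= T -> T <= TT -> forall A, F t A ->
  (\int[Qx x0]_(w in A) (expR (phi (T - t) 0 u 1 + dotv (psi (T - t) 0 u 1) (Xp t w).1.1
       + dotv u (Xp t w).1.2 + 1 * (Xp t w).2))%:E
   = \int[Qx x0]_(w in A) (expR (aff_expo 0 u 1 (Xp T w)))%:E)%E.
Proof.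
move=> hU Dx0 t T t0 tT TTT A FA.
have ht : 0 <= t <= TT by rewrite t0 /= (le_trans tT TTT).
have hT : 0 <= T <= TT by rewrite TTT andbT (le_trans t0 tT).
set s := T - t.
have s0 : 0 <= s by rewrite /s subr_ge0.
have hs : 0 <= s <= TT by rewrite s0 /= /s; lra.
have tsT : t + s = T by rewrite /s addrC subrK.
have sG := Fsig ht; have Gm := Fsub ht; have mA := Gm _ FA.
pose e := fun y : @state R k n => expR (aff_expo 0 u 1 y).
pose f := fun (N : nat) (y : @state R k n) => Num.min (e y) N%:R.
have me : measurable_fun (T:=g_sigma_algebraType (@coord_gen R k n)) (U:=R) setT e.
  by rewrite /e; apply: measurableT_comp; [exact: measurable_expR | exact: ST_aff].
have mf N : meas_wrt (state_meas k n) (f N).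
  apply: ST_wrt; apply: measurable_minr => //; exact: measurable_cst.
have f0 N y : 0 <= f N y by rewrite /f le_min expR_ge0 ler0n.
have fb N y : `|f N y| <= N%:R by rewrite ger0_norm // ge_min lexx orbT.
have fnd y N M : (N <= M)%N -> f N y <= f M y.
  by move=> NM; rewrite /f le_min2 // ler_nat.
have flim y : (fun N => (f N y)%:E) @ \oo --> (e y)%:E.
  apply: cvg_near_cst; exists (Num.truncn (e y)).+1 => // N /= hN.
  congr EFin; apply: min_l; apply: ltW; apply: (lt_le_trans (truncnS_gt _)).
  by rewrite ler_nat.
pose g := fun N w => fine (\int[Qx (Xp t w)]_v (f N (Xp s v))%:E).
have hg N : is_condexp (Qx x0) (F t) (fun w => f N (Xp T w)) (g N).
  case: hM => _ _ _ h4.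
  have := h4 x0 Dx0 t s t0 s0 _ (f N) (mf N) (ex_intro _ N%:R (fb N)).
  by rewrite tsT; apply.
have mfs N : measurable_fun setT (fun v => f N (Xp s v)) := Xp_meas hs (mf N).
have integ x N : (\int[Qx x]_v (f N (Xp s v))%:E)%E \is a fin_num.
  rewrite ge0_fin_numE; last by apply: integral_ge0 => v _; rewrite lee_fin.
  apply: (@le_lt_trans _ _ (\int[Qx x]_v (cst (N%:R)%:E v))%E).
    apply: ge0_le_integral => //.
    - by move=> v _; rewrite lee_fin.
    - exact/measurable_EFinP.
    - by move=> v _; rewrite lee_fin /f ge_min lexx orbT.
  rewrite integral_cst // ltey_eq fin_numM //.
  rewrite ge0_fin_numE ?measure_ge0 //.
  exact: (le_lt_trans (probability_le1 (Qx x) measurableT) (ltry 1)).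
have gE N w : ((g N w)%:E = \int[Qx (Xp t w)]_v (f N (Xp s v))%:E)%E.
  by rewrite /g fineK.
have mg N : measurable_fun setT (g N) := wrt_meas Gm (hg N).1.
have g0 N w : 0 <= g N w.
  by rewrite /g fine_ge0 //; apply: integral_ge0 => v _; rewrite lee_fin.
have gnd w N M : (N <= M)%N -> g N w <= g M w.
  move=> NM; rewrite -lee_fin !gE; apply: ge0_le_integral => //.
  - by move=> v _; rewrite lee_fin.
  - exact/measurable_EFinP.
  - exact/measurable_EFinP.
  - by move=> v _; rewrite lee_fin fnd.
have L1 : (\int[Qx x0]_(w in A) (expR (aff_expo 0 u 1 (Xp T w)))%:E =
           limn (fun N => \int[Qx x0]_(w in A) (f N (Xp T w))%:E))%E.
  rewrite -monotone_convergence //.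
  - by apply: eq_integral => w _; apply/esym/cvg_lim => //; exact: flim.
  - move=> N; apply/measurable_EFinP.
    exact: measurable_funS (Xp_meas hT (mf N)).
  - by move=> N w _; rewrite lee_fin.
  - by move=> w _ N M NM; rewrite lee_fin fnd.
have L2 : (limn (fun N => \int[Qx x0]_(w in A) (g N w)%:E) =
           \int[Qx x0]_(w in A) limn (fun N => (g N w)%:E))%E.
  rewrite -monotone_convergence //.
  - by move=> N; apply/measurable_EFinP; exact: measurable_funS (mg N).
  - by move=> N w _; rewrite lee_fin.
  - by move=> w _ N M NM; rewrite lee_fin gnd.
have mh : measurable_fun setT (fun w => expR (phi s 0 u 1 + dotv (psi s 0 u 1) (Xp t w).1.1
       + dotv u (Xp t w).1.2 + 1 * (Xp t w).2)).
  exact: (Xp_meas ht (ST_wrt _ (ST_exp _ _ _ _))).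
have L3 : (\int[Qx x0]_(w in A) limn (fun N => (g N w)%:E) =
   \int[Qx x0]_(w in A) (expR (phi s 0 u 1 + dotv (psi s 0 u 1) (Xp t w).1.1
       + dotv u (Xp t w).1.2 + 1 * (Xp t w).2))%:E)%E.
  apply: ae_eq_integral => //.
  - apply: (emeasurable_fun_cvg (fun N w => (g N w)%:E)).
      by move=> N; apply/measurable_EFinP; exact: measurable_funS (mg N).
    move=> w _; apply: ereal_nondecreasing_is_cvgn => N M NM.
    by rewrite lee_fin gnd.
  - by apply/measurable_EFinP; exact: measurable_funS mh.
  case: hM => _ _ h3 _; have [N0 [mN0 N00 sub]] := h3 x0 Dx0 t ht.
  exists N0; split => // w /= Hw; apply: sub => /= Dw; apply: Hw => _.
  under eq_fun do rewrite gE.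
  rewrite -monotone_convergence //.
  - rewrite -(hA 0 u 1 hU (Xp t w) Dw s hs).
    by apply: eq_integral => v _; apply/cvg_lim => //; exact: flim.
  - by move=> N; apply/measurable_EFinP.
  - by move=> N v _; rewrite lee_fin.
  - by move=> v _ N M NM; rewrite lee_fin fnd.
rewrite -L3 -L2 L1.
have -> : (fun N => \int[Qx x0]_(w in A) (g N w)%:E)%E =
          (fun N => \int[Qx x0]_(w in A) (f N (Xp T w))%:E)%E.
  by apply/funext => N; exact: (hg N).2.
by [].
Qed.
End Model.
Section Extra.
Context {R : realType}.

Lemma dotv0 {m : nat} (b : 'rV[R]_m) : dotv 0 b = 0.
Proof. by rewrite /dotv big1 // => j _; rewrite mxE mul0r. Qed.

Lemma dotvB {m : nat} (a c b : 'rV[R]_m) : dotv (a - c) b = dotv a b - dotv c b.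
Proof. by rewrite /dotv -sumrB; apply: eq_bigr => j _; rewrite !mxE mulrBl. Qed.

Lemma measurable_inv : measurable_fun [set: R] (@GRing.inv R).
Proof.
have -> : (@GRing.inv R) = (fun x => if x == 0 then 0 else x^-1).
  by apply/funext => x; case: eqP => [->|//]; rewrite invr0.
apply: measurable_fun_if => //.
- apply: measurable_fun_eqr => //; exact: measurable_cst.
rewrite setTI (_ : _ @^-1` _ = [set x | x != 0]); last first.
  by apply/seteqP; split => x /=; case: eqP.
apply: open_continuous_measurable_fun; first exact: open_neq.
by move=> x /set_mem /= x0; apply: inv_continuous.
Qed.

Context {k n : nat}.
Local Notation ST := (g_sigma_algebraType (@coord_gen R k n)).

Lemma ST_exp1 (c : R) (P : 'rV[R]_k) :
  measurable_fun (T:=ST) (U:=R) setT (fun y : @state R k n => expR (c + dotv P y.1.1)).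
Proof.
apply: measurableT_comp; first exact: measurable_expR.
apply: measurable_funD; first exact: measurable_cst.
exact: ST_dot1.
Qed.

Lemma ST_expN : measurable_fun (T:=ST) (U:=R) setT (fun y : @state R k n => expR (- y.2)).
Proof.
apply: measurableT_comp; first exact: measurable_expR.
exact: (measurable_funN ST_c2).
Qed.

Lemma ST_expZ : measurable_fun (T:=ST) (U:=R) setT (fun y : @state R k n => expR y.2).
Proof.
apply: measurableT_comp; first exact: measurable_expR.
exact: ST_c2.
Qed.

Lemma ST_exp3 (a : 'rV[R]_n) (c1 c2 : R) (P : 'rV[R]_k) :
  measurable_fun (T:=ST) (U:=R) setT
    (fun y : @state R k n => expR (dotv a y.1.2 + c1 - c2 + dotv P y.1.1)).
Proof.
apply: measurableT_comp; first exact: measurable_expR.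
apply: measurable_funD; first apply: measurable_funB; first apply: measurable_funD.
- exact: ST_dot2.
- exact: measurable_cst.
- exact: measurable_cst.
exact: ST_dot1.
Qed.

Lemma ST_expaff v u w : measurable_fun (T:=ST) (U:=R) setT
    (fun y : @state R k n => expR (aff_expo v u w y)).
Proof.
apply: measurableT_comp; first exact: measurable_expR.
exact: ST_aff.
Qed.

End Extra.
Theorem proposition5p5 (R : realType) (d : measure_display) (Omega : measurableType d)
  (TT : R) (k n m : nat) (DX : set 'rV[R]_k)
  (F : R -> set (set Omega)) (Xp : R -> Omega -> @state R k n)
  (Qx : @state R k n -> probability Omega R)
  (phi : R -> 'rV[R]_k -> 'rV[R]_n -> R -> R)
  (psi : R -> 'rV[R]_k -> 'rV[R]_n -> R -> 'rV[R]_k)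
  (u : 'I_m.+1 -> 'rV[R]_n) (l : R) (lam : 'rV[R]_k) (x0 : @state R k n)
  (Bp : R -> R -> Omega -> R) (S : 'I_m.+1 -> R -> R -> Omega -> R) :
  let D := [set s : @state R k n | DX s.1.1] in
  let Q := Qx x0 in
  let bank := fun t w => expR (- (Xp t w).2) in
  0 < TT ->
  closed DX -> convex_rV DX ->
  filtration TT F ->
  markov_family TT F D Xp Qx ->
  stoch_continuous TT D Xp Qx ->
  affine_property TT D Xp Qx phi psi ->
  u ord0 = 0 ->
  (forall i, Ureal TT D Xp Qx 0 (u i) 1) ->
  short_rate TT D Xp Qx l lam ->
  D x0 -> x0.2 = 0 ->
  (forall t T, 0 <= t -> t <= T -> T <= TT ->
     is_condexp Q (F t) (fun w => bank t w / bank T w) (Bp t T)) ->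
  (forall i : 'I_m.+1, (0 < i)%N -> forall T, 0 <= T <= TT -> forall w,
     S i T T w = expR (dotv (u i) (Xp T w).1.2)) ->
  (forall i : 'I_m.+1, (0 < i)%N -> forall t T, 0 <= t -> t <= T -> T <= TT ->
     is_condexp_dens Q (fun w => Bp T T w / (bank T w * Bp 0 T w)) (F t)
       (S i T T) (S i t T)) ->
  forall t T, 0 <= t -> t <= T -> T <= TT ->
    [/\ is_condexp Q (F t) (fun w => expR ((Xp T w).2 - (Xp t w).2)) (Bp t T),
        Q.-negligible [set w | Bp t T w <>
           expR (phi (T - t) 0 0 1 + dotv (psi (T - t) 0 0 1) (Xp t w).1.1)] &
        forall i : 'I_m.+1, (0 < i)%N ->
          (forall g1 g2 : Omega -> R,
             is_condexp Q (F t) (fun w => expR ((Xp T w).2 + dotv (u i) (Xp T w).1.2)) g1 ->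
             is_condexp Q (F t) (fun w => expR (Xp T w).2) g2 ->
             Q.-negligible [set w | S i t T w <> g1 w / g2 w]) /\
          Q.-negligible [set w | S i t T w <>
             expR (dotv (u i) (Xp t w).1.2 + phi (T - t) 0 (u i) 1 - phi (T - t) 0 0 1
                   + dotv (psi (T - t) 0 (u i) 1 - psi (T - t) 0 0 1) (Xp t w).1.1)]].
Proof.
move=> D Q bank; rewrite {}/D {}/Q {}/bank.
move=> TT0 cDX cvDX hF hM hSC hA u0 hU hSR Dx0 x00 hBp hST hS t T t0 tT TTT.
have ht : 0 <= t <= TT by rewrite t0 /= (le_trans tT TTT).
have T0 : 0 <= T := le_trans t0 tT.
have hT : 0 <= T <= TT by rewrite T0 TTT.
have hU0 : Ureal TT [set s : @state R k n | DX s.1.1] Xp Qx 0 0 1.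
  by have := hU ord0; rewrite u0.
have P1 t' T' : 0 <= t' -> t' <= T' -> T' <= TT ->
    is_condexp (Qx x0) (F t') (fun w => expR ((Xp T' w).2 - (Xp t' w).2)) (Bp t' T').
  move=> a b c; have := hBp t' T' a b c.
  have -> : (fun w => expR ((Xp T' w).2 - (Xp t' w).2)) =
            (fun w => expR (- (Xp t' w).2) / expR (- (Xp T' w).2)).
    by apply/funext => w; rewrite -expRB opprK addrC.
  by [].
have P2 t' T' : 0 <= t' -> t' <= T' -> T' <= TT ->
    (Qx x0).-negligible [set w | Bp t' T' w <>
       expR (phi (T' - t') 0 0 1 + dotv (psi (T' - t') 0 0 1) (Xp t' w).1.1)].
  move=> a b c; have ht' : 0 <= t' <= TT by rewrite a /= (le_trans b c).
  have hT' : 0 <= T' <= TT by rewrite c (le_trans a b).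
  have sG := Fsig TT F hF ht'; have Gm := Fsub TT F hF ht'.
  apply: (negl_neq (Qx x0) (F t')) => //.
  - exact: (P1 t' T' a b c).1.
  - exact: (Xp_wrt TT DX F Xp Qx hM ht' (ST_wrt _ (ST_exp1 _ _))).
  move=> A GA; rewrite ((P1 t' T' a b c).2 A GA).
  transitivity (\int[Qx x0]_(w in A)
     (expR (- (Xp t' w).2) * expR (aff_expo 0 0 1 (Xp T' w)))%:E)%E.
    apply: eq_integral => w _; congr EFin.
    by rewrite -expRD; congr expR; rewrite /aff_expo !dotv0; ring.
  rewrite -(pullout (Qx x0) (F t') (fun w => expR (- (Xp t' w).2))
     (fun w => expR (phi (T' - t') 0 0 1 + dotv (psi (T' - t') 0 0 1) (Xp t' w).1.1
       + dotv 0 (Xp t' w).1.2 + 1 * (Xp t' w).2))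
     (fun w => expR (aff_expo 0 0 1 (Xp T' w))) sG Gm) //.
  - apply: eq_integral => w _; congr EFin.
    by rewrite -expRD dotv0; congr expR; ring.
  - exact: (Xp_wrt TT DX F Xp Qx hM ht' (ST_wrt _ ST_expN)).
  - exact: (Xp_meas TT DX F Xp Qx hF hM ht' (ST_wrt _ (ST_exp _ _ _ _))).
  - exact: (Xp_meas TT DX F Xp Qx hF hM hT' (ST_wrt _ (ST_expaff _ _ _))).
  - exact: (key TT DX F Xp Qx phi psi hF hM hA 0 x0 hU0 Dx0 t' T' a b c).
have sG := Fsig TT F hF ht; have Gm := Fsub TT F hF ht.
have h00 : (0:R) <= 0 <= TT by rewrite lexx (ltW TT0).
pose C := expR (phi T 0 0 1 + dotv (psi T 0 0 1) x0.1.1).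
have C0 : 0 < C by exact: expR_gt0.
have NB0 : (Qx x0).-negligible [set w | Bp 0 T w <> C].
  case: hM => _ h2 _ _.
  apply: (negligibleS _ (negligibleU (P2 0 T (lexx _) T0 TTT) (h2 x0 Dx0))).
  move=> w /= hw; have [e|e] := pselect (Xp 0 w = x0); last by right.
  by left => hB; apply: hw; rewrite hB e subr0.
have NBT : (Qx x0).-negligible [set w | Bp T T w <> 1].
  have sGT := Fsig TT F hF hT; have GmT := Fsub TT F hF hT.
  apply: (negl_neq (Qx x0) (F T) _ (cst 1) sGT GmT) => //.
  - exact: (hBp T T T0 (lexx _) TTT).1.
  - by apply: (OG_wrt sGT); exact: measurable_cst.
  move=> A GA; rewrite ((hBp T T T0 (lexx _) TTT).2 A GA).
  by apply: eq_integral => w _; rewrite divff // gt_eqF // expR_gt0.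
pose W := fun w => expR (Xp T w).2 / C.
have NR : (Qx x0).-negligible
    [set w | Bp T T w / (expR (- (Xp T w).2) * Bp 0 T w) <> W w].
  apply: (negligibleS _ (negligibleU NB0 NBT)).
  move=> w /= hw; have [e1|e1] := pselect (Bp 0 T w = C); last by left.
  have [e2|e2] := pselect (Bp T T w = 1); last by right.
  by exfalso; apply: hw; rewrite e1 e2 /W expRN div1r invfM invrK.
have mW : measurable_fun setT W.
  apply: measurable_funM; last exact: measurable_cst.
  exact: (Xp_meas TT DX F Xp Qx hF hM hT (ST_wrt _ ST_expZ)).
have W0 w : 0 < W w by rewrite /W divr_gt0 // expR_gt0.
have eW w : W w = C^-1 * expR (aff_expo 0 0 1 (Xp T w)).
  by rewrite /W /aff_expo !dotv0 !add0r mul1r mulrC.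
have iW : (Qx x0).-integrable setT (EFin \o W).
  apply/integrableP; split; first exact/measurable_EFinP.
  rewrite (eq_integral (fun w => ((C^-1)%:E * (expR (aff_expo 0 0 1 (Xp T w)))%:E)%E)); last first.
    by move=> w _ /=; rewrite ger0_norm ?(ltW (W0 w)) // eW EFinM.
  rewrite ge0_integralZl //.
  - apply: lte_mul_pinfty => //; first by rewrite lee_fin invr_ge0 ltW.
    exact: (hU0 x0 Dx0 T hT).
  - apply/measurable_EFinP.
    exact: (Xp_meas TT DX F Xp Qx hF hM hT (ST_wrt _ (ST_expaff _ _ _))).
  - by rewrite lee_fin invr_ge0 ltW.
split.
- exact: (P1 t T t0 tT TTT).
- exact: (P2 t T t0 tT TTT).
move=> i i0.
pose hu := fun w => expR (phi (T - t) 0 (u i) 1 + dotv (psi (T - t) 0 (u i) 1) (Xp t w).1.1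
   + dotv (u i) (Xp t w).1.2 + 1 * (Xp t w).2).
pose h0 := fun w => expR (phi (T - t) 0 0 1 + dotv (psi (T - t) 0 0 1) (Xp t w).1.1
   + dotv 0 (Xp t w).1.2 + 1 * (Xp t w).2).
pose qf := fun w => expR (dotv (u i) (Xp t w).1.2 + phi (T - t) 0 (u i) 1 - phi (T - t) 0 0 1
   + dotv (psi (T - t) 0 (u i) 1 - psi (T - t) 0 0 1) (Xp t w).1.1).
have Ku := key TT DX F Xp Qx phi psi hF hM hA (u i) x0 (hU i) Dx0 t T t0 tT TTT.
have K0 := key TT DX F Xp Qx phi psi hF hM hA 0 x0 hU0 Dx0 t T t0 tT TTT.
have E1 w : hu w = qf w * h0 w.
  by rewrite /hu /qf /h0 -expRD dotv0 dotvB; congr expR; ring.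
have mhu : meas_wrt (F t) hu.
  exact: (Xp_wrt TT DX F Xp Qx hM ht (ST_wrt _ (ST_exp _ _ _ _))).
have mh0 : meas_wrt (F t) h0.
  exact: (Xp_wrt TT DX F Xp Qx hM ht (ST_wrt _ (ST_exp _ _ _ _))).
have mqf : meas_wrt (F t) qf.
  exact: (Xp_wrt TT DX F Xp Qx hM ht (ST_wrt _ (ST_exp3 _ _ _ _))).
have NS : (Qx x0).-negligible [set w | S i t T w <> qf w].
  apply: (negl_neq_w (Qx x0) (F t) (S i t T) qf W sG Gm) => //.
    exact: (hS i i0 t T t0 tT TTT).1.
  move=> B GB; have mB := Gm _ GB.
  have mSt : measurable_fun setT (S i t T) := wrt_meas Gm (hS i i0 t T t0 tT TTT).1.
  have mST : measurable_fun setT (S i T T).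
    have -> : S i T T = fun w => expR (dotv (u i) (Xp T w).1.2).
      by apply/funext => w; exact: hST.
    have mf : measurable_fun (T:=g_sigma_algebraType (@coord_gen R k n)) (U:=R) setT
        (fun y : @state R k n => expR (dotv (u i) y.1.2)).
      apply: measurableT_comp; first exact: measurable_expR.
      exact: ST_dot2.
    exact: (Xp_meas TT DX F Xp Qx hF hM hT (ST_wrt _ mf)).
  have mrho : measurable_fun setT
      (fun w => Bp T T w / (expR (- (Xp T w).2) * Bp 0 T w)).
    apply: measurable_funM.
      exact: (wrt_meas (Fsub TT F hF hT) (hBp T T T0 (lexx _) TTT).1).
    apply: (measurableT_comp measurable_inv); apply: measurable_funM.
      exact: (Xp_meas TT DX F Xp Qx hF hM hT (ST_wrt _ ST_expN)).
    exact: (wrt_meas (Fsub TT F hF h00) (hBp 0 T (lexx 0) T0 TTT).1).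
  have ae1 (Sf : Omega -> R) : measurable_fun setT Sf ->
      (\int[Qx x0]_(w in B) (Sf w * W w)%:E =
       \int[Qx x0]_(w in B) (Sf w * (Bp T T w / (expR (- (Xp T w).2) * Bp 0 T w)))%:E)%E.
    move=> mSf; apply: ae_eq_integral => //.
    - apply/measurable_EFinP; apply: measurable_funS (measurable_funM mSf mW) => //.
    - apply/measurable_EFinP; apply: measurable_funS (measurable_funM mSf mrho) => //.
    case: NR => N [mN N0 sub]; exists N; split => // w /= hw; apply: sub => /= e.
    by apply: hw => _; rewrite e.
  rewrite (ae1 _ mSt) ((hS i i0 t T t0 tT TTT).2 B GB) -(ae1 _ mST).
  transitivity (\int[Qx x0]_(w in B) (cst C^-1 w * expR (aff_expo 0 (u i) 1 (Xp T w)))%:E)%E.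
    apply: eq_integral => w _; rewrite (hST i i0 T hT w) /W /aff_expo dotv0 add0r mul1r.
    by rewrite expRD /cst; congr EFin; ring.
  rewrite -(pullout (Qx x0) (F t) (cst C^-1) hu (fun w => expR (aff_expo 0 (u i) 1 (Xp T w))) sG Gm) //.
  - transitivity (\int[Qx x0]_(w in B) ((qf w / C) * h0 w)%:E)%E.
      by apply: eq_integral => w _; rewrite E1 /cst; congr EFin; ring.
    rewrite (pullout (Qx x0) (F t) (fun w => qf w / C) h0 (fun w => expR (aff_expo 0 0 1 (Xp T w))) sG Gm) //.
    + apply: eq_integral => w _; rewrite /W /aff_expo !dotv0 !add0r mul1r.
      by congr EFin; ring.
    + have mf : measurable_fun (T:=g_sigma_algebraType (@coord_gen R k n)) (U:=R) setT
          (fun y : @state R k n => expR (dotv (u i) y.1.2 + phi (T - t) 0 (u i) 1 - phi (T - t) 0 0 1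
             + dotv (psi (T - t) 0 (u i) 1 - psi (T - t) 0 0 1) y.1.1) / C).
        apply: measurable_funM; first exact: ST_exp3.
        exact: measurable_cst.
      exact: (Xp_wrt TT DX F Xp Qx hM ht (ST_wrt _ mf)).
    + by move=> w; rewrite divr_ge0 ?expR_ge0 // ltW.
    + exact: (Xp_meas TT DX F Xp Qx hF hM ht (ST_wrt _ (ST_exp _ _ _ _))).
    + exact: (Xp_meas TT DX F Xp Qx hF hM hT (ST_wrt _ (ST_expaff _ _ _))).
    + by move=> w; exact: expR_ge0.
  - by apply: (OG_wrt sG); exact: measurable_cst.
  - by move=> w; rewrite /cst invr_ge0 ltW.
  - exact: (Xp_meas TT DX F Xp Qx hF hM ht (ST_wrt _ (ST_exp _ _ _ _))).
  - exact: (Xp_meas TT DX F Xp Qx hF hM hT (ST_wrt _ (ST_expaff _ _ _))).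
  - by move=> w; exact: expR_ge0.
split; last exact: NS.
move=> g1 g2 hg1 hg2.
have N1 : (Qx x0).-negligible [set w | g1 w <> hu w].
  apply: (negl_neq (Qx x0) (F t) g1 hu sG Gm) => //; first exact: hg1.1.
  move=> A GA; rewrite hg1.2 // Ku //.
  by apply: eq_integral => w _; rewrite /aff_expo dotv0 add0r mul1r addrC.
have N2 : (Qx x0).-negligible [set w | g2 w <> h0 w].
  apply: (negl_neq (Qx x0) (F t) g2 h0 sG Gm) => //; first exact: hg2.1.
  move=> A GA; rewrite hg2.2 // K0 //.
  by apply: eq_integral => w _; rewrite /aff_expo !dotv0 !add0r mul1r.
apply: (negligibleS _ (negligibleU (negligibleU N1 N2) NS)).
move=> w /= hw; have [a|a] := pselect (g1 w = hu w); last by left; left.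
have [b|b] := pselect (g2 w = h0 w); last by left; right.
have [c|c] := pselect (S i t T w = qf w); last by right.
by exfalso; apply: hw; rewrite c a b E1 mulfK // gt_eqF // expR_gt0.
Qed.
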